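(* Let $M$ be a $\lambda$-term. If $M$ is typable in the system $E^S_A$ (i.e. some judgment $\Delta\vdash M:a$ is derivable), then the head reduction of $M$ ends.
   Context: $[n]=\{1,\dots,n\}$. Fix a class $\mathcal C$ of functions between finite ordinals equal to one of: all bijections, all injections, all surjections, all functions. For a small category $X$, $SX$ has finite lists of objects of $X$ as objects and morphisms $\langle x_1,\dots,x_n\rangle\to\langle y_1,\dots,y_m\rangle$ the tuples $\langle\alpha,f_1,\dots,f_m\rangle$ with $\alpha:[m]\to[n]$ in $\mathcal C$, $f_i:x_{\alpha(i)}\to y_i$; composite of $\langle\alpha,\vec f\rangle$ then $\langle\beta,\vec g\rangle$ is $\langle\alpha\circ\beta,(g_i\circ f_{\beta(i)})_i\rangle$; tensor $\oplus$ = concatenation, unit $\langle\rangle$. Fix a small category $A$. $D=D_A$ is the colimit of $D_0=A$, $D_{k+1}=(SD_k)^{o}\times D_k\sqcup A$: objects $a::=o\mid\langle a_1,\dots,a_k\rangle\Rightarrow a$ ($o\in\mathrm{Ob}(A)$); morphisms are those of $A$ and $\langle\alpha,\vec f\rangle\Rightarrow f:(\vec a\Rightarrow a)\to(\vec a'\Rightarrow a')$ for $\langle\alpha,\vec f\rangle:\vec a'\to\vec a$ in $SD$, $f:a\to a'$. $SD=S(D_A)$. Contexts are $\Delta=\langle\vec a_1,\dots,\vec a_n\rangle\in(SD)^n$, written $x_1:\vec a_1,\dots,x_n:\vec a_n$; $\otimes$ is componentwise concatenation. Type system $E^S_A$: (Var) given morphisms $f_j:\vec a_j\to\langle\rangle$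 ($j\ne i$) and $f_i:\vec a_i\to\langle a\rangle$ in $SD$, infer $x_1:\vec a_1,\dots,x_n:\vec a_n\vdash x_i:a$; (Abs) from $\Delta,x:\vec a\vdash M:a$ infer $\Delta\vdash\lambda x.M:\vec a\Rightarrow a$; (App) from $\Gamma_0\vdash M:\langle a_1,\dots,a_k\rangle\Rightarrow a$, $\Gamma_i\vdash N:a_i$ ($1\le i\le k$) and a morphism $\eta:\Delta\to\bigotimes_{i=0}^k\Gamma_i$ in $(SD)^n$, infer $\Delta\vdash MN:a$. Head reduction: $H(M)=M$ if $M=\lambda\vec y.\,y\vec N$, and $H(M)=\lambda\vec y.\,P[N/x]\vec N$ if $M=\lambda\vec y.(\lambda x.P)N\vec N$; the head reduction of $M$ ends if iterating $H$ reaches a term $M'$ with $H(M')=M'$. *)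

(* Defs.v *)
From mathcomp Require Import all_boot.
Set Implicit Arguments.
Unset Strict Implicit.
Unset Printing Implicit Defensive.

Record category := Category {
  Ob : Type;
  Hom : Ob -> Ob -> Type;
  idm : forall a, Hom a a;
  (* diagrammatic order: comp f g = g o f *)
  comp : forall a b c, Hom a b -> Hom b c -> Hom a c;
  comp_idl : forall a b (f : Hom a b), comp (idm a) f = f;
  comp_idr : forall a b (f : Hom a b), comp f (idm b) = f;
  comp_assoc : forall a b c d (f : Hom a b) (g : Hom b c) (h : Hom c d),
      comp (comp f g) h = comp f (comp g h)
}.

(* [n] = {1..n} is represented by 'I_n = {0..n-1}. *)
Inductive fclass := CBij | CInj | CSurj | CAll.

Definition in_class (c : fclass) m n (al : 'I_m -> 'I_n) : Prop :=
  match c with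
  | CBij => bijective al
  | CInj => injective al
  | CSurj => forall y, exists x, al x = y
  | CAll => True
  end.

Section DA.
Variables (c : fclass) (A : category).

(* objects of D_A:  a ::= o | <a_1,...,a_k> => a *)
Inductive dty : Type :=
| DBase (o : Ob A)
| DArr (l : seq dty) (a : dty).

(* dhom a b : morphisms a -> b of D_A;
   shom xs ys : morphisms <x_1..x_n> -> <y_1..y_m> of S(D_A), i.e.
   <alpha, f_1..f_m> with alpha : [m] -> [n] in C and f_i : x_(alpha i) -> y_i. *)
Inductive dhom : dty -> dty -> Type :=
| dhom_base (o o' : Ob A) (f : Hom o o') : dhom (DBase o) (DBase o')
| dhom_arr (l l' : seq dty) (a a' : dty) (s : shom l' l) (f : dhom a a') :
    dhom (DArr l a) (DArr l' a')
with shom : seq dty -> seq dty -> Type :=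
| shom_mk (xs ys : seq dty) (al : 'I_(size ys) -> 'I_(size xs))
    (Hal : in_class c al)
    (fs : forall i : 'I_(size ys), dhom (tnth (in_tuple xs) (al i)) (tnth (in_tuple ys) i)) :
    shom xs ys.

(* contexts Delta in (SD)^n : the n-th component is the list of types of x_n.
   We store contexts with the most recently bound variable first (de Bruijn). *)
Definition ctx := seq (seq dty).

Definition ctxhom (D G : ctx) : Type :=
  ((size D = size G) *
   (forall j : 'I_(size D), shom (nth [::] D j) (nth [::] G j)))%type.

Definition ctx_tensor (G G' : ctx) : ctx := [seq x.1 ++ x.2 | x <- zip G G'].
Definition ctx_bigtensor (n : nat) (Gs : seq ctx) : ctx :=
  foldr ctx_tensor (nseq n [::]) Gs.

End DA.

Inductive term : Type :=
| Var (i : nat)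
| Lam (M : term)
| App (M N : term).

Fixpoint lift (k cut : nat) (M : term) : term :=
  match M with
  | Var i => if cut <= i then Var (i + k) else Var i
  | Lam P => Lam (lift k cut.+1 P)
  | App P Q => App (lift k cut P) (lift k cut Q)
  end.

Fixpoint subst (N : term) (cut : nat) (P : term) : term :=
  match P with
  | Var i => if i == cut then lift cut 0 N
             else if cut < i then Var i.-1 else Var i
  | Lam Q => Lam (subst N cut.+1 Q)
  | App Q R => App (subst N cut Q) (subst N cut R)
  end.

(* one head step: lam ys.(lam x.P) N Ns  |->  lam ys. P[N/x] Ns ;
   None iff the term has the form lam ys. y Ns *)
Fixpoint hstep (M : term) : option term :=
  match M with
  | Var _ => None
  | Lam P => omap Lam (hstep P)
  | App (Lam P) N => Some (subst N 0 P)
  | App P N => omap (fun P' => App P' N) (hstep P)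
  end.

Definition H (M : term) : term :=
  if hstep M is Some M' then M' else M.

Definition head_normal (M : term) : Prop := hstep M = None.

Definition head_red_ends (M : term) : Prop :=
  exists k, head_normal (iter k H M).

Inductive typing (c : fclass) (A : category) : ctx A -> term -> dty A -> Prop :=
| ty_var (D : ctx A) (i : nat) (a : dty A) (Hi : i < size D)
    (fo : forall j : 'I_(size D), nat_of_ord j != i -> shom c (nth [::] D j) [::])
    (fi : shom c (nth [::] D i) [:: a]) :
    typing c D (Var i) a
| ty_abs (D : ctx A) (l : seq (dty A)) (M : term) (a : dty A) :
    typing c (l :: D) M a -> typing c D (Lam M) (DArr l a)
| ty_app (D G0 : ctx A) (M N : term) (GA : seq (ctx A * dty A)) (a : dty A)
    (HM : typing c G0 M (DArr (map snd GA) a))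
    (HN : forall i : 'I_(size GA),
        typing c (tnth (in_tuple GA) i).1 N (tnth (in_tuple GA) i).2)
    (Hsz : all (fun G => size G == size D) (G0 :: map fst GA))
    (eta : ctxhom c D (ctx_bigtensor (size D) (G0 :: map fst GA))) :
    typing c D (App M N) a.

(* Main.v *)
Require Import Defs.
From mathcomp Require Import all_boot.

Definition upren (r : nat -> nat) (i : nat) : nat := if i is j.+1 then (r j).+1 else 0.
Fixpoint ren (r : nat -> nat) (M : term) : term :=
  match M with
  | Var i => Var (r i)
  | Lam P => Lam (ren (upren r) P)
  | App P Q => App (ren r P) (ren r Q)
  end.
Definition up (s : nat -> term) (i : nat) : term :=
  if i is j.+1 then ren S (s j) else Var 0.
Fixpoint sub (s : nat -> term) (M : term) : term :=
  match M with
  | Var i => s i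
  | Lam P => Lam (sub (up s) P)
  | App P Q => App (sub s P) (sub s Q)
  end.
Definition scons (N : term) (s : nat -> term) (i : nat) : term :=
  if i is j.+1 then s j else N.

Lemma ren_ext M : forall r r', (forall i, r i = r' i) -> ren r M = ren r' M.
Proof.
elim: M => [i|P IH|P IHP Q IHQ] r r' E /=; first by rewrite E.
- by rewrite (IH _ (upren r')) // => -[|j] //=; rewrite E.
- by rewrite (IHP _ r') // (IHQ _ r').
Qed.

Lemma sub_ext M : forall s s', (forall i, s i = s' i) -> sub s M = sub s' M.
Proof.
elim: M => [i|P IH|P IHP Q IHQ] s s' E /=; first by rewrite E.
- by rewrite (IH _ (up s')) // => -[|j] //=; rewrite E.
- by rewrite (IHP _ s') // (IHQ _ s').
Qed.

Lemma ren_ren M : forall r r', ren r (ren r' M) = ren (r \o r') M.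
Proof.
elim: M => [i|P IH|P IHP Q IHQ] r r' //=.
- by rewrite IH; congr Lam; apply: ren_ext => -[|j].
- by rewrite IHP IHQ.
Qed.

Lemma sub_ren M : forall s r, sub s (ren r M) = sub (s \o r) M.
Proof.
elim: M => [i|P IH|P IHP Q IHQ] s r //=.
- by rewrite IH; congr Lam; apply: sub_ext => -[|j].
- by rewrite IHP IHQ.
Qed.

Lemma ren_sub M : forall r s, ren r (sub s M) = sub (ren r \o s) M.
Proof.
elim: M => [i|P IH|P IHP Q IHQ] r s //=.
- rewrite IH; congr Lam; apply: sub_ext => -[|j] //=.
  by rewrite !ren_ren; apply: ren_ext.
- by rewrite IHP IHQ.
Qed.

Lemma sub_sub M : forall s t, sub s (sub t M) = sub (sub s \o t) M.
Proof.
elim: M => [i|P IH|P IHP Q IHQ] s t //=.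
- rewrite IH; congr Lam; apply: sub_ext => -[|j] //=.
  by rewrite sub_ren ren_sub; apply: sub_ext.
- by rewrite IHP IHQ.
Qed.

Lemma sub_id M : sub Var M = M.
Proof.
suff: forall s, (forall i, s i = Var i) -> sub s M = M by apply.
elim: M => [i|P IH|P IHP Q IHQ] s E /=; first by rewrite E.
- by rewrite IH // => -[|j] //=; rewrite E.
- by rewrite IHP // IHQ.
Qed.

Lemma lift_ren k M : forall c, Defs.lift k c M = ren (fun i => if c <= i then i + k else i) M.
Proof.
elim: M => [i|P IH|P IHP Q IHQ] c //=.
- by case: ifP.
- by rewrite IH; congr Lam; apply: ren_ext => -[|j] //=; rewrite ltnS; case: ifP.
- by rewrite IHP IHQ.
Qed.

Lemma lift0 M : forall c, Defs.lift 0 c M = M.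
Proof.
elim: M => [i|P IH|P IHP Q IHQ] c /=; last by rewrite IHP IHQ.
- by rewrite addn0; case: ifP.
- by rewrite IH.
Qed.

Definition sig (N : term) (c i : nat) : term :=
  if i == c then Defs.lift c 0 N else if c < i then Var i.-1 else Var i.

Lemma subst_sub N P : forall c, subst N c P = sub (sig N c) P.
Proof.
elim: P => [i|P IH|P IHP Q IHQ] c //=; last by rewrite IHP IHQ.
rewrite IH; congr Lam; apply: sub_ext => -[|j] //=.
rewrite /sig eqSS ltnS; case: ifP => _; last by case: ifP => //; case: j.
by rewrite !lift_ren ren_ren; apply: ren_ext => i /=; rewrite addnS.
Qed.

Lemma subst0 N P : subst N 0 P = sub (scons N Var) P.
Proof.
by rewrite subst_sub; apply: sub_ext => -[|j] //=; rewrite /sig /= lift0.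
Qed.

Notation HN := head_red_ends.

Lemma H_step M M' : hstep M = Some M' -> H M = M'.
Proof. by rewrite /H => ->. Qed.

Lemma HN_step M M' : hstep M = Some M' -> HN M' -> HN M.
Proof. by move=> E [k Hk]; exists k.+1; rewrite iterSr (H_step _ _ E). Qed.
Arguments HN_step {M M'}.

Lemma HN_nf M : hstep M = None -> HN M.
Proof. by move=> E; exists 0. Qed.

Lemma hstep_app_nonlam M N : (forall P, M <> Lam P) ->
  hstep (App M N) = omap (fun P' => App P' N) (hstep M).
Proof. by case: M => // P /(_ P). Qed.

Lemma hstep_sub P : forall P' s, hstep P = Some P' -> hstep (sub s P) = Some (sub s P').
Proof.
elim: P => [i|P IH|P IHP Q IHQ] P' s //=.
- case E: (hstep P) => [R|] //= [<-].
  by rewrite (IH R) .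
- case: P IHP => [i|P|P1 P2] IHP //.
  + move=> [<-]; congr Some; rewrite !subst0 !sub_sub; apply: sub_ext => -[|j] //=.
    by rewrite sub_ren -[RHS]sub_id; apply: sub_ext.
  + change (sub s (App (App P1 P2) Q)) with (App (sub s (App P1 P2)) (sub s Q)).
    change (omap (App^~ Q) (hstep (App P1 P2)) = Some P' -> hstep (App (sub s (App P1 P2)) (sub s Q)) = Some (sub s P')).
    rewrite (hstep_app_nonlam (sub s (App P1 P2))) //.
    case E: (hstep (App P1 P2)) => [R|] //.
    rewrite (IHP R s E) => -[<-] //.
Qed.

Lemma HN_sub_inv s P : HN (sub s P) -> HN P.
Proof.
move=> [k]; elim: k P => [|k IH] P Hk.
- case E: (hstep P) => [P'|]; last exact: HN_nf.
  by move: Hk; rewrite /head_normal /= (hstep_sub _ _ s E).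
- case E: (hstep P) => [P'|]; last exact: HN_nf.
  apply: (HN_step E); apply: IH.
  by move: Hk; rewrite iterSr (H_step _ _ (hstep_sub _ _ s E)).
Qed.

Lemma H_lam P : H (Lam P) = Lam (H P).
Proof. by rewrite /H /=; case: (hstep P). Qed.

Lemma iter_lam k P : iter k H (Lam P) = Lam (iter k H P).
Proof. by elim: k => //= k ->; rewrite H_lam. Qed.

Lemma HN_lam P : HN P -> HN (Lam P).
Proof.
move=> [k Hk]; exists k; rewrite iter_lam /head_normal /=.
by rewrite Hk.
Qed.

Lemma HN_app_inv M N : HN (App M N) -> HN M.
Proof.
move=> [k]; elim: k M => [|k IH] M.
- case: M => [i|P|M1 M2] Hk; first exact: HN_nf.
  + by move: Hk; rewrite /head_normal.
  + case E: (hstep (App M1 M2)) => [R|]; last exact: HN_nf.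
    by move: Hk; rewrite /head_normal (hstep_app_nonlam (App M1 M2)) // E.
- case: M => [i|P|M1 M2] Hk; first exact: HN_nf.
  + apply: HN_lam; apply: (HN_sub_inv (scons N Var)).
    by exists k; move: Hk; rewrite iterSr /H /= subst0.
  + case E: (hstep (App M1 M2)) => [R|]; last exact: HN_nf.
    apply: (HN_step E); apply: IH.
    move: Hk; rewrite iterSr (H_step (App (App M1 M2) N) (App R N)) //.
    by rewrite hstep_app_nonlam // E.
Qed.

Definition apps (M : term) (Ns : seq term) : term := foldl App M Ns.

Lemma apps_rcons M Ns N : apps M (rcons Ns N) = App (apps M Ns) N.
Proof. by rewrite /apps foldl_rcons. Qed.

Lemma apps_var i Ns : hstep (apps (Var i) Ns) = None /\ forall P, apps (Var i) Ns <> Lam P.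
Proof.
elim/last_ind: Ns => [|Ns N [IH1 IH2]] //.
by rewrite apps_rcons hstep_app_nonlam // IH1.
Qed.

Lemma apps_redex P N Ns :
  hstep (apps (App (Lam P) N) Ns) = Some (apps (subst N 0 P) Ns) /\
  forall Q, apps (App (Lam P) N) Ns <> Lam Q.
Proof.
elim/last_ind: Ns => [|Ns N' [IH1 IH2]] //.
by rewrite !apps_rcons hstep_app_nonlam // IH1.
Qed.

Section Sem.
Variables (c : fclass) (A : category).

Fixpoint sem (a : dty A) (M : term) {struct a} : Prop :=
  match a with
  | DBase _ => HN M
  | DArr l b => forall N, foldr (fun x P => sem x N /\ P) True l -> sem b (App M N)
  end.

Definition semall (l : seq (dty A)) (N : term) : Prop :=
  foldr (fun x P => sem x N /\ P) True l.

Lemma foldr_tnth (T : Type) (P : T -> Prop) (L : seq T) :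
  foldr (fun x Q => P x /\ Q) True L <-> forall i : 'I_(size L), P (tnth (in_tuple L) i).
Proof.
elim: L => [|x L IH] /=; first by split => // _ -[].
split.
- move=> [h1 /IH h2] [[|j] Hj].
  + by rewrite (tnth_nth x).
  + have Hj' : j < size L by [].
    by have := h2 (Ordinal Hj'); rewrite !(tnth_nth x).
- move=> h; split; first by have := h ord0; rewrite (tnth_nth x).
  apply/IH => -[j Hj]; have Hj' : j.+1 < size (x :: L) by [].
  by have := h (Ordinal Hj'); rewrite !(tnth_nth x).
Qed.

Lemma foldr_map (T U : Type) (P : U -> Prop) (f : T -> U) (L : seq T) :
  foldr (fun x Q => P x /\ Q) True (map f L) = foldr (fun x Q => P (f x) /\ Q) True L.
Proof. by elim: L => //= x L ->. Qed.

Lemma semall_cat l1 l2 N : semall (l1 ++ l2) N <-> semall l1 N /\ semall l2 N.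
Proof.
rewrite /semall; elim: l1 => [|x l1 IH] /=; first by split => // -[].
split; first by move=> [h /IH [h1 h2]].
by move=> [[h h1] h2]; split => //; apply/IH.
Qed.

Lemma sem_neutral a : forall i Ns, sem a (apps (Var i) Ns).
Proof.
elim: a => [o|l b IH] i Ns /=.
- by apply: HN_nf; case: (apps_var i Ns).
- by move=> N _; rewrite -apps_rcons.
Qed.

Lemma semall_var l i : semall l (Var i).
Proof. by elim: l => //= x l IH; split => //; apply: (sem_neutral x i [::]). Qed.

Lemma sem_expand a : forall P N Ns, sem a (apps (sub (scons N Var) P) Ns) ->
  sem a (apps (App (Lam P) N) Ns).
Proof.
elim: a => [o|l b IH] P N Ns /=.
- apply: HN_step; case: (apps_redex P N Ns) => -> _; by rewrite subst0.
- move=> h N' hN'; rewrite -apps_rcons; apply: IH; rewrite apps_rcons; exact: h.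
Qed.

Lemma sem_HN a : forall M, sem a M -> HN M.
Proof.
elim: a => [o|l b IH] M //= h.
apply: (HN_app_inv _ (Var 0)); apply: IH; apply: h; exact: semall_var.
Qed.

Scheme dhom_ind' := Induction for dhom Sort Prop with shom_ind' := Induction for shom Sort Prop.

Lemma shom_sem xs ys (s : shom c xs ys) : forall N, semall xs N -> semall ys N.
Proof.
move: xs ys s.
apply: (@shom_ind' c A (fun a b _ => forall M, sem a M -> sem b M)
                  (fun xs ys _ => forall N, semall xs N -> semall ys N)).
- by [].
- move=> l l' a a' s' IHs f IHf M /= h N hN; apply: IHf; apply: h; exact: IHs.
- move=> xs' ys' al Hal fs IH N /foldr_tnth h; apply/foldr_tnth => i.
  apply: IH; exact: h.
Qed.

End Sem.

Definition myin (T : Type) (x : T) (l : seq T) : Prop := foldr (fun y P => x = y \/ P) False l.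
Arguments myin {T}.
Arguments sem {A}.
Arguments semall {A}.
Arguments shom_sem {c A xs ys} s {N}.
Arguments sem_expand {A}.
Arguments semall_var {A}.
Arguments sem_HN {A}.
Arguments semall_cat {A}.

Lemma all_myin (T : Type) (p : pred T) l x : all p l -> myin x l -> p x.
Proof. by elim: l => //= y l IH /andP [py pl] [->|/IH]; auto. Qed.

Lemma myin_tnth (T U : Type) (f : T -> U) (L : seq T) (i : 'I_(size L)) :
  myin (f (tnth (in_tuple L) i)) (map f L).
Proof.
elim: L i => [|x L IH] [[|j] Hj] //=; first by left; rewrite (tnth_nth x).
right; have Hj' : j < size L by [].
by have := IH (Ordinal Hj'); rewrite !(tnth_nth x).
Qed.

Section Ctx.
Variable A : category.

Lemma size_tensor (G T : ctx A) : size G = size T -> size (ctx_tensor G T) = size G.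
Proof. by move=> E; rewrite /ctx_tensor size_map size_zip E minnn. Qed.

Lemma nth_tensor (G T : ctx A) j : size G = size T ->
  nth [::] (ctx_tensor G T) j = nth [::] G j ++ nth [::] T j.
Proof.
move=> E; case: (ltnP j (size G)) => Hj.
- rewrite /ctx_tensor (nth_map ([::], [::])); last by rewrite size_zip E minnn -E.
  by rewrite nth_zip.
- by rewrite !nth_default // ?size_tensor // -E.
Qed.

Lemma bigtensor_spec n (Gs : seq (ctx A)) : all (fun G => size G == n) Gs ->
  size (ctx_bigtensor n Gs) = n /\
  forall j, nth [::] (ctx_bigtensor n Gs) j = flatten (map (fun G => nth [::] G j) Gs).
Proof.
elim: Gs => [|G Gs IH] /=.
- by move=> _; rewrite size_nseq; split => // j; rewrite nth_nseq; case: ifP.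
- move=> /andP [/eqP sG /IH [s1 s2]]; split.
  + by rewrite size_tensor // sG.
  + by move=> j; rewrite nth_tensor ?s2 // sG.
Qed.

Lemma semall_flatten (Gs : seq (ctx A)) j N G :
  semall (flatten (map (fun G => nth [::] G j) Gs)) N -> myin G Gs -> semall (nth [::] G j) N.
Proof.
elim: Gs => [|G' Gs IH] //= /semall_cat [h1 h2] [->|/IH]; auto.
Qed.

End Ctx.

Arguments all_myin {T p l x}.
Arguments bigtensor_spec {A n Gs}.
Arguments semall_flatten {A Gs j N G}.
Arguments myin_tnth {T U}.
Lemma adequacy c (A : category) (D : ctx A) (M : term) (a : dty A) : typing c D M a ->
  forall s, (forall j, semall (nth [::] D j) (s j)) -> sem a (sub s M).
Proof.
elim => {D M a}.
- move=> D i a Hi fo fi s hs /=.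
  by have := shom_sem fi (hs i) => -[].
- move=> D l M a _ IH s hs /= N hN.
  apply: (sem_expand _ _ _ [::]) => /=.
  rewrite sub_sub; have -> : sub (sub (scons N Var) \o up s) M = sub (scons N s) M.
    apply: sub_ext => -[|j] //=; rewrite sub_ren -[RHS]sub_id; exact: sub_ext.
  by apply: IH => -[|j] //=.
- move=> D G0 M N GA a _ IHM _ IHN Hsz eta s hs.
  have key : forall G, myin G (G0 :: map fst GA) -> forall j, semall (nth [::] G j) (s j).
    move=> G HG j; have /eqP sG := all_myin Hsz HG.
    case: (ltnP j (size D)) => Hj; last by rewrite nth_default ?sG.
    have := shom_sem (eta.2 (Ordinal Hj)) (hs j).
    have [_ ->] := bigtensor_spec Hsz.
    by move/semall_flatten; apply.
  apply: (IHM s (key G0 (or_introl erefl))).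
  rewrite foldr_map; apply/foldr_tnth => i; apply: IHN; apply: key.
  by right; apply: myin_tnth.
Qed.

Theorem lemma8 (c : fclass) (A : category) (M : term) (D : ctx A) (a : dty A) :
  typing c D M a -> head_red_ends M.
Proof.
move=> Ht; have := adequacy _ _ _ _ _ Ht Var (fun j => semall_var _ j).
by rewrite sub_id; apply: sem_HN.
Qed.
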